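(* 1. $W_v(P_4)=2$ and $D_v(P_4)=3$. 2. $D_\kappa(C_4)=4$ and $W_\kappa(C_4)\ge 3$.
   Context: Graphs are finite simple graphs; $P_4$ is the path on 4 vertices and $C_4$ the cycle on 4 vertices. A graph is $k$-connected if it has more than $k$ vertices, is connected, and remains connected after removal of any $k-1$ vertices; $\kappa(G)$ is the maximum $k$ such that $G$ is $k$-connected; $v(G)$ is the number of vertices. We use first-order logic of graphs with relation symbols for adjacency and equality only; the variable width of a sentence is the number of distinct variables it uses. For a graph parameter $\pi\in\{v,\kappa\}$, $D_\pi(F)$ (resp. $W_\pi(F)$) is the minimum quantifier depth (resp. variable width) of a first-order sentence $\Phi$ for which there is an integer $k$ such that for every connected graph $G$ with $\pi(G)\ge k$, $G\models\Phi$ if and only if $G$ contains a (not necessarily induced) subgraph isomorphic to $F$. *)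

(* Defs.v *)
From mathcomp Require Import all_boot.
Set Implicit Arguments. Unset Strict Implicit. Unset Printing Implicit Defensive.

(* ---------- finite simple graphs (vertex set 'I_n; every finite graph is
   isomorphic to one of these, and all notions below are iso-invariant) ---- *)
Record graph := Graph {
  gn : nat;
  gadj : rel 'I_gn;
  gsym : symmetric gadj;
  girr : irreflexive gadj }.

Definition nverts (G : graph) : nat := gn G.

Definition connected_on (G : graph) (A : {set 'I_(gn G)}) : Prop :=
  (exists x, x \in A) /\
  forall x y, x \in A -> y \in A ->
    connect [rel a b | [&& @gadj G a b, a \in A & b \in A]] x y.

Arguments connected_on : clear implicits.

Definition connected (G : graph) : Prop := connected_on G setT.

Definition kconnected (G : graph) (k : nat) : Prop :=
  k < gn G /\ connected G /\
  forall S : {set 'I_(gn G)}, #|S| < k -> connected_on G (~: S).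

(* kappa(G) >= k, where kappa(G) is the maximum k' with G k'-connected *)
Definition kappa_ge (G : graph) (k : nat) : Prop :=
  exists k', k <= k' /\ kconnected G k'.

Inductive param := Pv | Pkappa.

Definition param_ge (p : param) (G : graph) (k : nat) : Prop :=
  match p with
  | Pv => k <= nverts G
  | Pkappa => kappa_ge G k
  end.

(* F is isomorphic to a (not necessarily induced) subgraph of G *)
Definition contains (G F : graph) : Prop :=
  exists f : 'I_(gn F) -> 'I_(gn G),
    injective f /\ forall a b, @gadj F a b -> @gadj G (f a) (f b).

Definition p4_adj : rel 'I_4 := fun i j => (i.+1 == j :> nat) || (j.+1 == i :> nat).
Lemma p4_sym : symmetric p4_adj.
Proof. by move=> i j; rewrite /p4_adj orbC. Qed.
Lemma p4_irr : irreflexive p4_adj.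
Proof. by move=> i; rewrite /p4_adj; case: i => [[|[|[|[|]]]] ?]. Qed.
Definition P4 : graph := Graph p4_sym p4_irr.

Definition c4_adj : rel 'I_4 :=
  fun i j => ((i.+1 %% 4) == j :> nat) || ((j.+1 %% 4) == i :> nat).
Lemma c4_sym : symmetric c4_adj.
Proof. by move=> i j; rewrite /c4_adj orbC. Qed.
Lemma c4_irr : irreflexive c4_adj.
Proof. by move=> i; rewrite /c4_adj; case: i => [[|[|[|[|]]]] ?]. Qed.
Definition C4 : graph := Graph c4_sym c4_irr.

Inductive form :=
  | FEq of nat & nat
  | FAdj of nat & nat
  | FNot of form
  | FAnd of form & form
  | FOr of form & form
  | FImp of form & form
  | FEx of nat & form
  | FAll of nat & form.

Fixpoint free (x : nat) (f : form) : bool :=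
  match f with
  | FEq a b | FAdj a b => (x == a) || (x == b)
  | FNot g => free x g
  | FAnd g h | FOr g h | FImp g h => free x g || free x h
  | FEx y g | FAll y g => (x != y) && free x g
  end.

Definition sentence (f : form) : Prop := forall x, ~~ free x f.

Fixpoint qd (f : form) : nat :=
  match f with
  | FEq _ _ | FAdj _ _ => 0
  | FNot g => qd g
  | FAnd g h | FOr g h | FImp g h => maxn (qd g) (qd h)
  | FEx _ g | FAll _ g => (qd g).+1
  end.

Fixpoint vars (f : form) : seq nat :=
  match f with
  | FEq a b | FAdj a b => [:: a; b]
  | FNot g => vars g
  | FAnd g h | FOr g h | FImp g h => vars g ++ vars h
  | FEx y g | FAll y g => y :: vars g
  end.

Definition width (f : form) : nat := size (undup (vars f)).

Definition upd {T} (env : nat -> option T) (x : nat) (v : T) : nat -> option T :=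
  fun y => if y == x then Some v else env y.

Fixpoint sat (G : graph) (env : nat -> option 'I_(gn G)) (f : form) : Prop :=
  match f with
  | FEq a b => match env a, env b with Some u, Some v => u = v | _, _ => False end
  | FAdj a b => match env a, env b with Some u, Some v => @gadj G u v | _, _ => False end
  | FNot g => ~ sat env g
  | FAnd g h => sat env g /\ sat env h
  | FOr g h => sat env g \/ sat env h
  | FImp g h => sat env g -> sat env h
  | FEx x g => exists v : 'I_(gn G), sat (upd env x v) g
  | FAll x g => forall v : 'I_(gn G), sat (upd env x v) g
  end.

Definition models (G : graph) (f : form) : Prop := @sat G (fun _ => None) f.

Definition defines (p : param) (F : graph) (Phi : form) : Prop :=
  sentence Phi /\
  exists k, forall G : graph, connected G -> param_ge p G k ->
    (models G Phi <-> contains G F).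

Definition D_is (p : param) (F : graph) (d : nat) : Prop :=
  (exists Phi, defines p F Phi /\ qd Phi = d) /\
  (forall Phi, defines p F Phi -> d <= qd Phi).

Definition W_is (p : param) (F : graph) (w : nat) : Prop :=
  (exists Phi, defines p F Phi /\ width Phi = w) /\
  (forall Phi, defines p F Phi -> w <= width Phi).

Definition W_ge (p : param) (F : graph) (w : nat) : Prop :=
  forall Phi, defines p F Phi -> w <= width Phi.

(* Main.v *)
Require Import Defs.
From mathcomp Require Import all_boot.

From mathcomp Require Import all_boot.
From mathcomp Require Import zify.
Set Implicit Arguments. Unset Strict Implicit. Unset Printing Implicit Defensive.

Section Game.
Variables (T1 T2 : eqType) (r1 : rel T1) (r2 : rel T2).

Definition piso (L : seq (T1 * T2)) : Prop :=
  forall p q, p \in L -> q \in L ->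
    (p.1 == q.1) = (p.2 == q.2) /\ r1 p.1 q.1 = r2 p.2 q.2.

Fixpoint game (d : nat) (L : seq (T1 * T2)) : Prop :=
  match d with
  | 0 => piso L
  | d'.+1 => piso L /\ (forall v, exists w, game d' ((v, w) :: L))
                    /\ (forall w, exists v, game d' ((v, w) :: L))
  end.

Lemma game_piso d L : game d L -> piso L.
Proof. by case: d => [|d] //= []. Qed.

Lemma piso_cons v w L :
  symmetric r1 -> symmetric r2 -> r1 v v = r2 w w ->
  piso L ->
  (forall q, q \in L -> (v == q.1) = (w == q.2) /\ r1 v q.1 = r2 w q.2) ->
  piso ((v, w) :: L).
Proof.
move=> s1 s2 hvv hL hq p q; rewrite !inE => /orP[/eqP-> | pL] /orP[/eqP-> | qL] /=.
- by rewrite !eqxx.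
- exact: hq.
- have [h1 h2] := hq p pL; split; first by rewrite eq_sym h1 eq_sym.
  by rewrite s1 h2 s2.
- exact: hL.
Qed.

Lemma piso_nil : piso [::].
Proof. by []. Qed.
End Game.

Section EFD.
Variables G1 G2 : graph.
Notation V1 := ('I_(gn G1)). Notation V2 := ('I_(gn G2)).

Definition corr (L : seq (V1 * V2)) (e1 : nat -> option V1) (e2 : nat -> option V2) :=
  forall a, (e1 a = None /\ e2 a = None) \/
            exists u w, [/\ e1 a = Some u, e2 a = Some w & (u, w) \in L].

Lemma corr_upd L e1 e2 x v w :
  corr L e1 e2 -> corr ((v,w)::L) (upd e1 x v) (upd e2 x w).
Proof.
move=> h a; rewrite /upd; case: (a == x).
  by right; exists v, w; rewrite inE eqxx.
case: (h a) => [|[u [w' [h1 h2 h3]]]]; first by left.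
by right; exists u, w'; rewrite inE h3 orbT.
Qed.

Theorem ef_depth f : forall d L e1 e2, qd f <= d ->
  game (@gadj G1) (@gadj G2) d L -> corr L e1 e2 ->
  (sat e1 f <-> sat e2 f).
Proof.
elim: f => [a b|a b|g IH|g IHg h IHh|g IHg h IHh|g IHg h IHh|x g IH|x g IH]
  d L e1 e2 /= hd hg hc.
- have hp := game_piso hg.
  case: (hc a) => [[-> ->]|[u [w [-> -> uL]]]]; first by [].
  case: (hc b) => [[-> ->]|[u' [w' [-> -> uL']]]]; first by [].
  have [h1 _] := hp _ _ uL uL'; rewrite /= in h1.
  by split=> E; apply/eqP; [rewrite -h1 | rewrite h1]; apply/eqP.
- have hp := game_piso hg.
  case: (hc a) => [[-> ->]|[u [w [-> -> uL]]]]; first by [].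
  case: (hc b) => [[-> ->]|[u' [w' [-> -> uL']]]]; first by [].
  have [_ h2] := hp _ _ uL uL'; rewrite /= in h2.
  by rewrite h2.
- by have := IH d L e1 e2 hd hg hc; tauto.
- have := IHg d L e1 e2 (leq_trans (leq_maxl _ _) hd) hg hc.
  have := IHh d L e1 e2 (leq_trans (leq_maxr _ _) hd) hg hc; tauto.
- have := IHg d L e1 e2 (leq_trans (leq_maxl _ _) hd) hg hc.
  have := IHh d L e1 e2 (leq_trans (leq_maxr _ _) hd) hg hc; tauto.
- have := IHg d L e1 e2 (leq_trans (leq_maxl _ _) hd) hg hc.
  have := IHh d L e1 e2 (leq_trans (leq_maxr _ _) hd) hg hc; tauto.
- case: d hd hg => [|d] // hd [_ [fw bw]]; split.
  + case=> v hv; have [w hw] := fw v; exists w.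
    exact: (IH d _ _ _ hd hw (corr_upd x v w hc)).1.
  + case=> w hw; have [v hv] := bw w; exists v.
    exact: (IH d _ _ _ hd hv (corr_upd x v w hc)).2.
- case: d hd hg => [|d] // hd [_ [fw bw]]; split.
  + move=> H w; have [v hv] := bw w.
    exact: (IH d _ _ _ hd hv (corr_upd x v w hc)).1.
  + move=> H v; have [w hw] := fw v.
    exact: (IH d _ _ _ hd hw (corr_upd x v w hc)).2.
Qed.

Corollary ef_models d f : qd f <= d -> game (@gadj G1) (@gadj G2) d [::] ->
  (models G1 f <-> models G2 f).
Proof. by move=> hd hg; apply: (ef_depth hd hg) => a; left. Qed.
End EFD.

From mathcomp Require Import all_boot.
From mathcomp Require Import zify.
Set Implicit Arguments. Unset Strict Implicit. Unset Printing Implicit Defensive.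

Section EFW.
Variables G1 G2 : graph.
Notation V1 := ('I_(gn G1)). Notation V2 := ('I_(gn G2)).
Variables (x y : nat).
Notation VV := [:: x; y].

Definition agree (o1 o1' : option V1) (o2 o2' : option V2) :=
 [/\ o1 = None <-> o2 = None, o1' = None <-> o2' = None &
  forall u v u' v', o1 = Some u -> o1' = Some v -> o2 = Some u' -> o2' = Some v' ->
     (u == v) = (u' == v') /\ gadj u v = gadj u' v'].

Definition winv e1 e2 := forall a b, a \in VV -> b \in VV ->
   agree (e1 a) (e1 b) (e2 a) (e2 b).

Variables (v0 : V1) (w0 : V2).
Hypothesis m12 : x != y -> forall (u v : V1) (u' : V2), exists w : V2,
   (v == u) = (w == u') /\ gadj v u = gadj w u'.
Hypothesis m21 : x != y -> forall (u' w : V2) (u : V1), exists v : V1,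
   (v == u) = (w == u') /\ gadj v u = gadj w u'.

Lemma agree_same (v : V1) (w : V2) : agree (Some v) (Some v) (Some w) (Some w).
Proof.
split=> // u1 u2 u3 u4 [<-] [<-] [<-] [<-]; by rewrite !eqxx !girr.
Qed.

Lemma winv_upd e1 e2 z (v : V1) (w : V2) : winv e1 e2 -> z \in VV ->
  (forall u u', z != (if z == x then y else x) ->
       e1 (if z == x then y else x) = Some u -> e2 (if z == x then y else x) = Some u' ->
       (v == u) = (w == u') /\ gadj v u = gadj w u') ->
  winv (upd e1 z v) (upd e2 z w).
Proof.
move=> hw hz hm.
set z' := (if z == x then y else x) in hm.
have hV : forall a, a \in VV -> a = z \/ a = z'.
  move=> a; rewrite /z' !inE; move: hz; rewrite !inE.
  by case/orP=> /eqP -> ; case/orP=> /eqP ->; rewrite ?eqxx; 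
     try (by left); try (by right); case: (y =P x) => [->|]; [left|right].
have hz' : z' \in VV by rewrite /z' !inE; case: (z == x); rewrite eqxx ?orbT.
case: (eqVneq z z') => [Ez|Nz].
  move=> a b /hV[->|->] /hV[->|->]; rewrite /upd -?Ez eqxx; exact: agree_same.
have [d1 _ _] := hw z' z' hz' hz'.
have hzz : upd e1 z v z = Some v /\ upd e2 z w z = Some w by rewrite /upd eqxx.
have hz1 : upd e1 z v z' = e1 z' by rewrite /upd eq_sym (negbTE Nz).
have hz2 : upd e2 z w z' = e2 z' by rewrite /upd eq_sym (negbTE Nz).
have hzz' : agree (Some v) (e1 z') (Some w) (e2 z').
  split=> //.
  move=> u1 u2 u3 u4 [<-] E1 [<-] E2; exact: hm.
have hz'z : agree (e1 z') (Some v) (e2 z') (Some w).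
  split=> //.
  move=> u1 u2 u3 u4 E1 [<-] E2 [<-]; have [h1 h2] := hm _ _ Nz E1 E2.
  by rewrite eq_sym h1 eq_sym gsym h2 gsym.
move=> a b /hV[->|->] /hV[->|->]; rewrite ?hz1 ?hz2 ?hzz.1 ?hzz.2 //.
- exact: agree_same.
- exact: hw.
Qed.

Lemma winv_ext e1 e2 z : winv e1 e2 -> z \in VV ->
  (forall v, exists w, winv (upd e1 z v) (upd e2 z w)) /\
  (forall w, exists v, winv (upd e1 z v) (upd e2 z w)).
Proof.
move=> hw hz.
set z' := (if z == x then y else x).
have hz' : z' \in VV by rewrite /z' !inE; case: (z == x); rewrite eqxx ?orbT.
have [d1 _ _] := hw z' z' hz' hz'.
have hxy : z != z' -> x != y.
  rewrite /z'; move: hz; rewrite !inE => /orP[/eqP->|/eqP->]; rewrite ?eqxx //.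
  by case: (y =P x) => [->|/eqP]; rewrite ?eqxx // eq_sym.
split.
- move=> v.
  case: (eqVneq z z') => [Ez|Nz].
    by exists w0; apply: winv_upd => // u u' /negP; rewrite -/z' Ez eqxx.
  case E1: (e1 z') => [u|].
    case E2: (e2 z') => [u'|]; last by move: d1 => [_ /(_ E2)]; rewrite E1.
    have [w hw'] := m12 (hxy Nz) u v u'.
    exists w; apply: winv_upd => // u1 u2 _; rewrite -/z' E1 E2 => [[<-] [<-]] //.
  exists w0; apply: winv_upd => // u1 u2 _; rewrite -/z' E1 //.
- move=> w.
  case: (eqVneq z z') => [Ez|Nz].
    by exists v0; apply: winv_upd => // u u' /negP; rewrite -/z' Ez eqxx.
  case E2: (e2 z') => [u'|].
    case E1: (e1 z') => [u|]; last by move: d1 => [/(_ E1)]; rewrite E2.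
    have [v hv'] := m21 (hxy Nz) u' w u.
    exists v; apply: winv_upd => // u1 u2 _; rewrite -/z' E1 E2 => [[<-] [<-]] //.
  case E1: (e1 z') => [u|]; first by move: d1 => [_ /(_ E2)]; rewrite E1.
  exists v0; apply: winv_upd => // u1 u2 _; rewrite -/z' E1 //.
Qed.

Theorem ef_width f : {subset vars f <= VV} -> forall e1 e2, winv e1 e2 ->
  (sat e1 f <-> sat e2 f).
Proof.
elim: f => [a b|a b|g IH|g IHg h IHh|g IHg h IHh|g IHg h IHh|z g IH|z g IH] /= hs e1 e2 hw.
- have hb : b \in VV by apply: hs; rewrite !inE eqxx orbT.
  have [h1 h2 h3] := hw a b (hs a (mem_head _ _)) hb.
  move: h1 h2 h3; case: (e1 a) => [u|]; case: (e2 a) => [u'|]; case: (e1 b) => [v|];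
    case: (e2 b) => [v'|] => h1 h2 h3 //;
    try (by case: h1 => /(_ erefl)); try (by case: h1 => _ /(_ erefl));
    try (by case: h2 => /(_ erefl)); try (by case: h2 => _ /(_ erefl)).
  have [E _] := h3 _ _ _ _ erefl erefl erefl erefl.
  by split=> H; apply/eqP; [rewrite -E | rewrite E]; apply/eqP.
- have hb : b \in VV by apply: hs; rewrite !inE eqxx orbT.
  have [h1 h2 h3] := hw a b (hs a (mem_head _ _)) hb.
  move: h1 h2 h3; case: (e1 a) => [u|]; case: (e2 a) => [u'|]; case: (e1 b) => [v|];
    case: (e2 b) => [v'|] => h1 h2 h3 //;
    try (by case: h1 => /(_ erefl)); try (by case: h1 => _ /(_ erefl));
    try (by case: h2 => /(_ erefl)); try (by case: h2 => _ /(_ erefl)).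
  by have [_ ->] := h3 _ _ _ _ erefl erefl erefl erefl.
- by have := IH hs e1 e2 hw; tauto.
- have hg : {subset vars g <= VV} by move=> a ha; apply: hs; rewrite mem_cat ha.
  have hh : {subset vars h <= VV} by move=> a ha; apply: hs; rewrite mem_cat ha orbT.
  have := IHg hg e1 e2 hw; have := IHh hh e1 e2 hw; tauto.
- have hg : {subset vars g <= VV} by move=> a ha; apply: hs; rewrite mem_cat ha.
  have hh : {subset vars h <= VV} by move=> a ha; apply: hs; rewrite mem_cat ha orbT.
  have := IHg hg e1 e2 hw; have := IHh hh e1 e2 hw; tauto.
- have hg : {subset vars g <= VV} by move=> a ha; apply: hs; rewrite mem_cat ha.
  have hh : {subset vars h <= VV} by move=> a ha; apply: hs; rewrite mem_cat ha orbT.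
  have := IHg hg e1 e2 hw; have := IHh hh e1 e2 hw; tauto.
- have hg : {subset vars g <= VV} by move=> a ha; apply: hs; rewrite inE ha orbT.
  have hz : z \in VV by apply: hs; rewrite inE eqxx.
  have [fw bw] := winv_ext hw hz; split.
  + case=> v hv; have [w hw'] := fw v; exists w; exact: (IH hg _ _ hw').1.
  + case=> w hw'; have [v hv] := bw w; exists v; exact: (IH hg _ _ hv).2.
- have hg : {subset vars g <= VV} by move=> a ha; apply: hs; rewrite inE ha orbT.
  have hz : z \in VV by apply: hs; rewrite inE eqxx.
  have [fw bw] := winv_ext hw hz; split.
  + move=> H w; have [v hv] := bw w; exact: (IH hg _ _ hv).1.
  + move=> H v; have [w hw'] := fw v; exact: (IH hg _ _ hw').2.
Qed.

Corollary efw_models f : {subset vars f <= VV} -> (models G1 f <-> models G2 f).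
Proof. by move=> hs; apply: ef_width => // a b _ _; split. Qed.
End EFW.

Lemma width_vars f : width f <= 2 -> exists x y, {subset vars f <= [:: x; y]}.
Proof.
rewrite /width => hw.
case E: (undup (vars f)) hw => [|a [|b [|c s]]] // _.
- exists 0, 0 => z hz; by rewrite -mem_undup E in hz.
- exists a, a => z hz; by rewrite -mem_undup E in hz; rewrite !inE; rewrite inE in hz; rewrite hz.
- exists a, b => z; by rewrite -mem_undup E.
Qed.

From mathcomp Require Import all_boot.
From mathcomp Require Import zify.
Set Implicit Arguments. Unset Strict Implicit. Unset Printing Implicit Defensive.

Lemma avoid (T : finType) (A B : {pred T}) : #|B| < #|A| -> exists2 c, c \in A & c \notin B.
Proof.
move=> h; apply/exists_inP; rewrite -negb_forall_in; apply/negP => /forall_inP H.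
have : A \subset B by apply/subsetP => c /H.
by move/subset_leq_card; rewrite leqNgt h.
Qed.

Lemma card_bigcup_le (I T : finType) (P : pred I) (F : I -> {set T}) :
  #|\bigcup_(i | P i) F i| <= \sum_(i | P i) #|F i|.
Proof.
apply: (big_ind2 (fun (A : {set T}) n => #|A| <= n)); first by rewrite cards0.
  by move=> A1 n1 A2 n2 h1 h2; apply: leq_trans (leq_card_setU _ _) _; apply: leq_add.
by [].
Qed.

Lemma connect_map (T T' : finType) (r : rel T) (r' : rel T') (f : T -> T') :
  (forall x y, r x y -> r' (f x) (f y)) -> forall x y, connect r x y -> connect r' (f x) (f y).
Proof.
move=> H x y /connectP [p pp ->]; elim: p x pp => [|z p IH] x /=; first by rewrite connect0.
by case/andP=> rxz pz; apply: connect_trans (connect1 (H _ _ rxz)) (IH _ pz).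
Qed.

Section MK.
Variables (T : finType) (e : rel T) (es : symmetric e) (ei : irreflexive e).
Definition mkadj : rel 'I_#|T| := fun i j => e (enum_val i) (enum_val j).
Lemma mk_sym : symmetric mkadj. Proof. by move=> i j; rewrite /mkadj es. Qed.
Lemma mk_irr : irreflexive mkadj. Proof. by move=> i; rewrite /mkadj ei. Qed.
Definition mkG := Graph mk_sym mk_irr.

Lemma mkG_adj a b : @gadj mkG (enum_rank a) (enum_rank b) = e a b.
Proof. by rewrite /= /mkadj !enum_rankK. Qed.

Definition NB (G : graph) := forall u : 'I_(gn G),
  (exists w, gadj u w) /\ (exists w, w != u /\ ~~ gadj u w).

Lemma mkG_NB : (forall a, (exists b, e a b) /\ (exists b, b != a /\ ~~ e a b)) -> NB mkG.
Proof.
move=> H u; have [[b hb] [c [hc1 hc2]]] := H (enum_val u); split.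
  by exists (enum_rank b); rewrite -(enum_valK u) mkG_adj.
exists (enum_rank c); rewrite -(enum_valK u) mkG_adj (inj_eq enum_rank_inj); by split.
Qed.

Lemma mkG_connected_on k :
  (forall S : {set T}, #|S| < k -> forall x y, x \notin S -> y \notin S ->
     connect [rel a b | [&& e a b, a \notin S & b \notin S]] x y) ->
  k <= #|T| ->
  forall S : {set 'I_(gn mkG)}, #|S| < k -> connected_on mkG (~: S).
Proof.
move=> H hk S hS; split.
  have hc : #|S| < #|predT : {pred 'I_(gn mkG)}|.
    by apply: leq_trans hS _; rewrite cardT size_enum_ord.
  have [c _ hc'] := @avoid _ predT (mem S) hc.
  by exists c; rewrite inE.
move=> x y; rewrite !inE => hx hy.
set S' := enum_val @: S.
have hS' : #|S'| < k by rewrite card_imset //; exact: enum_val_inj.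
have nS a : (enum_rank a \in S) = (a \in S').
  apply/idP/imsetP => [h|[i hi ->]]; first by exists (enum_rank a); rewrite ?enum_rankK.
  by rewrite enum_valK.
have := H S' hS' (enum_val x) (enum_val y).
rewrite -!nS !enum_valK => /(_ hx hy).
rewrite -{2}(enum_valK x) -{2}(enum_valK y).
apply: connect_map => a b /= /and3P [h1 h2 h3]; rewrite !in_setC !nS h2 h3 /mkadj !enum_rankK h1.
by [].
Qed.

Lemma mkG_kconnected k :
  (forall S : {set T}, #|S| < k -> forall x y, x \notin S -> y \notin S ->
     connect [rel a b | [&& e a b, a \notin S & b \notin S]] x y) ->
  k < #|T| -> 0 < k -> kconnected mkG k.
Proof.
move=> H hk k0; split; first by [].
split; last by apply: mkG_connected_on => //; exact: ltnW.
have := mkG_connected_on H (ltnW hk) (S := set0); rewrite cards0 setC0; exact.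
Qed.

Lemma mkG_contains (F : graph) : (exists f : 'I_(gn F) -> T,
    injective f /\ forall a b, @gadj F a b -> e (f a) (f b)) <-> contains mkG F.
Proof.
split.
  case=> f [fi fe]; exists (fun a => enum_rank (f a)); split.
    by move=> a b /enum_rank_inj /fi.
  by move=> a b /fe; rewrite mkG_adj.
case=> f [fi fe]; exists (fun a => enum_val (f a)); split.
  by move=> a b /enum_val_inj /fi.
by move=> a b /fe.
Qed.
End MK.

Section MKgame.
Variables (T1 T2 : finType) (e1 : rel T1) (e2 : rel T2).
Variables (s1 : symmetric e1) (i1 : irreflexive e1) (s2 : symmetric e2) (i2 : irreflexive e2).

Lemma game_mk d L : game e1 e2 d L ->
  game (@gadj (mkG s1 i1)) (@gadj (mkG s2 i2)) d
       (map (fun p => (enum_rank p.1, enum_rank p.2)) L).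
Proof.
have hp L' : piso e1 e2 L' -> piso (@gadj (mkG s1 i1)) (@gadj (mkG s2 i2))
       (map (fun p => (enum_rank p.1, enum_rank p.2)) L').
  move=> h p q /mapP [[a1 a2] ha ->] /mapP [[b1 b2] hb ->] /=.
  rewrite /mkadj !enum_rankK !(inj_eq enum_rank_inj); exact: (h _ _ ha hb).
elim: d L => [|d IH] L /=; first exact: hp.
case=> hL [fw bw]; split; first exact: hp.
split.
  move=> v; have [w hw] := fw (enum_val v); exists (enum_rank w).
  by have := IH _ hw; rewrite /= enum_valK.
move=> w; have [v hv] := bw (enum_val w); exists (enum_rank v).
by have := IH _ hv; rewrite /= enum_valK.
Qed.
End MKgame.

Lemma match_of_NB (G1 G2 : graph) : NB G2 -> forall (u v : 'I_(gn G1)) (u' : 'I_(gn G2)),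
  exists w, (v == u) = (w == u') /\ gadj v u = gadj w u'.
Proof.
move=> nb u v u'; have [[a ha] [b [hb1 hb2]]] := nb u'.
case: (eqVneq v u) => [->|Nvu]; first by exists u'; rewrite !eqxx !girr.
case A: (gadj v u).
  exists a; rewrite gsym ha; split => //; apply/esym/negbTE.
  by apply: contraTneq ha => ->; rewrite girr.
by exists b; rewrite gsym (negbTE hb2) (negbTE hb1).
Qed.

From mathcomp Require Import all_boot.
From mathcomp Require Import zify.
From Stdlib Require Import Classical.
Set Implicit Arguments. Unset Strict Implicit. Unset Printing Implicit Defensive.

Section GT.
Variable G : graph.
Notation V := ('I_(gn G)).

Lemma fresh (s : seq V) : size s < gn G -> exists w, w \notin s.
Proof.
move=> h; have h' : #|mem s| < #|predT : {pred V}|.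
  by apply: leq_ltn_trans (card_size s) _; rewrite cardT size_enum_ord.
by have [w _ hw] := avoid h'; exists w.
Qed.

Lemma closure : connected G -> forall (A : {set V}) x, x \in A ->
  (forall u v, u \in A -> gadj u v -> v \in A) -> forall y, y \in A.
Proof.
case=> _ hc A x hx hA y.
have := hc x y (in_setT _) (in_setT _).
move/connectP => [p pp ->]; elim: p x hx pp => [|z p IH] x hx //= /andP [/and3P [hxz _ _] pz].
exact: IH z (hA x z hx hxz) pz.
Qed.

Definition dom (u : V) := forall v, v = u \/ gadj u v.
Definition StarP := (exists c, dom c) /\ (forall u v, gadj u v -> dom u \/ dom v) /\
   ~ (exists u v, u <> v /\ dom u /\ dom v).

Lemma contains_P4 (a b c d : V) : uniq [:: a; b; c; d] ->
  gadj a b -> gadj b c -> gadj c d -> contains G P4.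
Proof.
rewrite /= !inE !negb_or => /and4P [/and3P [hab hac had] /andP [hbc hbd] hcd _] e1 e2 e3.
exists (fun i : 'I_4 => if val i == 0 then a else if val i == 1 then b
                       else if val i == 2 then c else d); split.
  move=> [[|[|[|[|i]]]] hi] [[|[|[|[|j]]]] hj] //=; try (by move=> _; apply: val_inj);
   try (by move=> E; move: hab hac had hbc hbd hcd; rewrite E ?eqxx);
   try (by rewrite ltnS ltn0 in hi); by rewrite ltnS ltn0 in hj.
move=> [[|[|[|[|i]]]] hi] [[|[|[|[|j]]]] hj] //=; rewrite /p4_adj /= //;
  try (by rewrite ltnS ltn0 in hi); try (by rewrite ltnS ltn0 in hj);
  move=> _; by rewrite gsym.
Qed.

Lemma get_P4 : contains G P4 -> exists a b c d : V,
  [/\ uniq [:: a; b; c; d], gadj a b, gadj b c & gadj c d].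
Proof.
case=> f [fi fe].
have ne (i j : 'I_4) : i != j -> f i != f j by move=> h; apply: contra h => /eqP /fi ->.
exists (f (@Ordinal 4 0 isT)), (f (@Ordinal 4 1 isT)), (f (@Ordinal 4 2 isT)),
  (f (@Ordinal 4 3 isT)); split; try (by apply: fe).
by rewrite /= !inE !negb_or !ne.
Qed.

Lemma star_noP4 : StarP -> ~ contains G P4.
Proof.
case=> [[c hc] [he hu]] /get_P4 [a [b [x [y [U hab _ hxy]]]]].
have toc u v : gadj u v -> u = c \/ v = c.
  move=> /he [du|dv].
    by case: (eqVneq u c) => [|N]; [left|exfalso; apply: hu; exists u, c; split => //; apply/eqP].
  by case: (eqVneq v c) => [|N]; [right|exfalso; apply: hu; exists v, c; split => //; apply/eqP].
move: U; rewrite /= !inE !negb_or => /and4P [/and3P [n1 n2 n3] /andP [n4 n5] n6 _].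
case: (toc _ _ hab) => E1; case: (toc _ _ hxy) => E2; rewrite E1 E2 ?eqxx in n1 n2 n3 n4 n5 n6 => //.
Qed.


Lemma uniq4 (a b c d : V) : a != b -> a != c -> a != d -> b != c -> b != d -> c != d ->
  uniq [:: a; b; c; d].
Proof. by rewrite /= !inE !negb_or => -> -> -> -> -> ->. Qed.

Lemma adj_neq (u v : V) : gadj u v -> u != v.
Proof. by apply: contraTneq => ->; rewrite girr. Qed.

Lemma noP4_star : connected G -> 5 <= gn G -> ~ contains G P4 -> StarP.
Proof.
move=> hc h5 hn.
have noP (a b c d : V) : uniq [:: a; b; c; d] -> gadj a b -> gadj b c -> gadj c d -> False.
  by move=> U e1 e2 e3; apply: hn; apply: (contains_P4 U e1 e2 e3).
have fr (s : seq V) : size s < 5 -> exists w, w \notin s.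
  by move=> h; apply: fresh; apply: leq_trans h h5.
have [x0 _] := fr [::] isT.
have step1 (x : V) : exists a, gadj x a.
  apply: NNPP => H.
  have hcl : forall u v, u \in [set x] -> gadj u v -> v \in [set x].
    by move=> u v; rewrite inE => /eqP -> huv; exfalso; apply: H; exists v.
  have [w hw] := fr [:: x] isT.
  have := closure hc (set11 x) hcl w; rewrite inE => /eqP Ew.
  by rewrite Ew inE eqxx in hw.
have [c [a [b [nab [hca hcb]]]]] : exists c a b : V, a != b /\ gadj c a /\ gadj c b.
  have [a ha] := step1 x0.
  case: (boolP [exists b, gadj x0 b && (b != a)]) => [/existsP [b /andP [hb nba]]| N1].
    by exists x0, a, b; rewrite eq_sym nba.
  case: (boolP [exists b, gadj a b && (b != x0)]) => [/existsP [b /andP [hb nbx]]| N2].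
    by exists a, x0, b; rewrite eq_sym nbx gsym ha hb.
  exfalso.
  have hcl : forall u v, u \in [set x0; a] -> gadj u v -> v \in [set x0; a].
    move=> u v; rewrite !inE => /orP [/eqP ->|/eqP ->] huv.
      by move: N1 => /existsPn /(_ v); rewrite huv /= negbK => ->; rewrite orbT.
    by move: N2 => /existsPn /(_ v); rewrite huv /= negbK => ->.
  have [w hw] := fr [:: x0; a] isT.
  have := closure hc (setU11 x0 [set a]) hcl w.
  by rewrite !inE; move: hw; rewrite !inE => /negPf ->.
have domc : dom c.
  have hcl : forall u v, u \in [set v | (v == c) || gadj c v] -> gadj u v ->
      v \in [set v | (v == c) || gadj c v].
    move=> u v; rewrite !inE => /orP [/eqP ->|hcu] huv; first by rewrite huv orbT.
    case: (eqVneq v c) => [//|nvc]; case hcv: (gadj c v) => //=; exfalso.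
    have [w [hcw nwu]] : exists w, gadj c w /\ w != u.
      by case: (eqVneq a u) => [E|N]; [exists b; rewrite hcb -E eq_sym nab|exists a].
    apply: (noP v u c w); last done; try by rewrite gsym.
    apply: uniq4; [by rewrite eq_sym adj_neq | done | by apply: contraFneq hcv => -> |
      by rewrite eq_sym adj_neq | by rewrite eq_sym | by rewrite adj_neq].
  move=> v; have := closure hc (A := [set v | (v == c) || gadj c v]) (x := c) _ hcl v.
  rewrite !inE eqxx => /(_ isT) /orP [/eqP ->|]; by [left|right].
have edge_c (u v : V) : gadj u v -> u = c \/ v = c.
  move=> huv; case: (eqVneq u c) => [|nuc]; first by left.
  case: (eqVneq v c) => [|nvc]; first by right.
  exfalso.
  have hcu : gadj c u by case: (domc u) => // E; rewrite E eqxx in nuc.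
  have hcv : gadj c v by case: (domc v) => // E; rewrite E eqxx in nvc.
  have [w hw] := fr [:: c; u; v] isT.
  move: hw; rewrite !inE !negb_or => /and3P [nwc nwu nwv].
  have hcw : gadj c w by case: (domc w) => // E; rewrite E eqxx in nwc.
  apply: (noP v u c w) => //; try by rewrite gsym.
  apply: uniq4 => //; try by rewrite eq_sym.
  by rewrite eq_sym adj_neq.
have key (d : V) : dom d -> d = c.
  move=> dd; apply: NNPP => /eqP ndc.
  have [w hw] := fr [:: c; d] isT.
  move: hw; rewrite !inE !negb_or => /andP [nwc nwd].
  case: (dd w) => [E|hdw]; first by rewrite E eqxx in nwd.
  by case: (edge_c _ _ hdw) => E; [rewrite E eqxx in ndc|rewrite E eqxx in nwc].
split; first by exists c.
split.
  move=> u v /edge_c [->|->]; by [left|right].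
by case=> u [v [nuv [du dv]]]; apply: nuv; rewrite (key _ du) (key _ dv).
Qed.

Lemma starP_iff : connected G -> 5 <= gn G -> (StarP <-> ~ contains G P4).
Proof.
move=> hc h5; split; first exact: star_noP4.
exact: noP4_star.
Qed.
End GT.

From mathcomp Require Import all_boot.
From mathcomp Require Import zify.
From Stdlib Require Import Classical.
Set Implicit Arguments. Unset Strict Implicit. Unset Printing Implicit Defensive.

Definition fDom (x y : nat) := FAll y (FOr (FEq y x) (FAdj x y)).
Definition fStar := FAnd (FEx 0 (fDom 0 1))
  (FAnd (FAll 0 (FAll 1 (FImp (FAdj 0 1) (FOr (fDom 0 1) (fDom 1 0)))))
        (FNot (FEx 0 (FEx 1 (FAnd (FNot (FEq 0 1)) (FAnd (fDom 0 1) (fDom 1 0))))))).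
Definition PhiP4 := FNot fStar.

Lemma PhiP4_sentence : sentence PhiP4.
Proof. by case=> [|[|x]]. Qed.
Lemma PhiP4_qd : qd PhiP4 = 3. Proof. by []. Qed.
Lemma PhiP4_width : width PhiP4 = 2. Proof. by []. Qed.

Lemma models_star G : models G fStar <-> StarP G.
Proof.
rewrite /models /= /upd /=; by split => h; exact h.
Qed.

Lemma defines_PhiP4 : defines Pv P4 PhiP4.
Proof.
split; first exact: PhiP4_sentence.
exists 5 => G hc h5.
have -> : models G PhiP4 <-> ~ models G fStar by [].
have := models_star G; have := @starP_iff G hc h5.
move=> A B; split.
  by move=> h; apply: NNPP => hn; apply: h; apply/B/A.
by move=> h /B /A; apply.
Qed.

Section Step.
Variables (T1 T2 : eqType) (r1 : rel T1) (r2 : rel T2).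
Hypotheses (s1 : symmetric r1) (i1 : irreflexive r1) (s2 : symmetric r2) (i2 : irreflexive r2).

Lemma step1 a b : ((exists c, r1 a c) -> (exists c, r2 b c)) ->
  ((exists c, c != a /\ ~~ r1 a c) -> (exists c, c != b /\ ~~ r2 b c)) ->
  forall v, exists w, (v == a) = (w == b) /\ r1 v a = r2 w b.
Proof.
move=> H1 H2 v; case: (eqVneq v a) => [->|nva].
  by exists b; rewrite !eqxx i1 i2.
case hva: (r1 v a).
  have ha : exists c, r1 a c by exists v; rewrite s1.
  have [c hc] := H1 ha.
  exists c; rewrite s2 hc; split => //; apply/esym/negbTE.
  by apply: contraTneq hc => ->; rewrite i2.
have ha : exists c, c != a /\ ~~ r1 a c by exists v; rewrite s1 hva.
have [c [hc1 hc2]] := H2 ha.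
by exists c; rewrite s2 (negbTE hc2) (negbTE hc1).
Qed.
End Step.

Lemma game1_single (T1 T2 : eqType) (r1 : rel T1) (r2 : rel T2) :
  symmetric r1 -> irreflexive r1 -> symmetric r2 -> irreflexive r2 -> forall a b,
  ((exists c, r1 a c) <-> (exists c, r2 b c)) ->
  ((exists c, c != a /\ ~~ r1 a c) <-> (exists c, c != b /\ ~~ r2 b c)) ->
  game r1 r2 1 [:: (a, b)].
Proof.
move=> s1 i1 s2 i2 a b [H1 H1'] [H2 H2'].
have p0 : piso r1 r2 [:: (a, b)].
  by move=> p q; rewrite !inE => /eqP -> /eqP ->; rewrite !eqxx i1 i2.
split=> //; split.
  move=> v; have [w [h1 h2]] := step1 s1 i1 s2 i2 H1 H2 v; exists w.
  apply: piso_cons => //; first by rewrite i1 i2.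
  by move=> q; rewrite inE => /eqP -> /=.
move=> w; have [v [h1 h2]] := step1 s2 i2 s1 i1 H1' H2' w; exists v.
apply: piso_cons => //; first by rewrite i1 i2.
by move=> q; rewrite inE => /eqP -> /=.
Qed.

Section Stars.
Variable k : nat.
Notation n := (k.+4).+1.
Definition sadj : rel 'I_n := fun i j => (val i == 0) != (val j == 0).
Definition tadj : rel 'I_n := fun i j =>
  sadj i j || ((val i == 1) && (val j == 2)) || ((val i == 2) && (val j == 1)).
Lemma sadj_sym : symmetric sadj. Proof. by move=> i j; rewrite /sadj eq_sym. Qed.
Lemma sadj_irr : irreflexive sadj. Proof. by move=> i; rewrite /sadj eqxx. Qed.
Lemma tadj_sym : symmetric tadj.
Proof.
move=> [i hi] [j hj]; rewrite /tadj /sadj /=.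
by case: i hi => [|[|[|i]]] hi; case: j hj => [|[|[|j]]] hj.
Qed.
Lemma tadj_irr : irreflexive tadj.
Proof. by move=> [[|[|[|i]]] hi]; rewrite /tadj /sadj. Qed.
Definition SG := Graph sadj_sym sadj_irr.
Definition TG := Graph tadj_sym tadj_irr.

Definition o : 'I_n := ord0.

Lemma connected_center (G : graph) (c : 'I_(gn G)) :
  (forall x, x != c -> gadj x c) -> connected G.
Proof.
move=> H; split; first by exists c; rewrite inE.
have tc x : connect [rel a b | [&& gadj a b, a \in setT & b \in setT]] x c.
  case: (eqVneq x c) => [->|nxc]; first exact: connect0.
  by apply: connect1; rewrite /= !inE H.
have ct y : connect [rel a b | [&& gadj a b, a \in setT & b \in setT]] c y.
  case: (eqVneq y c) => [->|nyc]; first exact: connect0.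
  by apply: connect1; rewrite /= !inE gsym H.
by move=> x y _ _; apply: connect_trans (tc x) (ct y).
Qed.

Lemma sadj_o x : x != o -> sadj x o.
Proof.
case: x => [[|x] hx] // /eqP h; exfalso; apply: h; exact: val_inj.
Qed.

Lemma SG_conn : connected SG.
Proof. by apply: (@connected_center SG o) => x /sadj_o. Qed.
Lemma TG_conn : connected TG.
Proof. by apply: (@connected_center TG o) => x /sadj_o h; rewrite /= /tadj h. Qed.

Lemma SG_noP4 : ~ contains SG P4.
Proof.
move/get_P4 => [a [b [c [d [U hab _ hcd]]]]].
have toc u v : sadj u v -> u = o \/ v = o.
  rewrite /sadj; case hu: (val u == 0); case hv: (val v == 0) => //= _.
    by left; apply: val_inj; apply/eqP.
  by right; apply: val_inj; apply/eqP.
move: U; rewrite /= !inE !negb_or => /and4P [/and3P [n1 n2 n3] /andP [n4 n5] n6 _].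
case: (toc _ _ hab) => E1; case: (toc _ _ hcd) => E2; rewrite E1 E2 ?eqxx in n1 n2 n3 n4 n5 n6 => //.
Qed.

Lemma TG_P4 : contains TG P4.
Proof.
by apply: (@contains_P4 TG (@Ordinal n 3 isT) (@Ordinal n 0 isT) (@Ordinal n 1 isT) (@Ordinal n 2 isT)).
Qed.

Lemma nbr_ST v : exists c, sadj v c.
Proof.
case: (eqVneq v o) => [->|h]; last by exists o; exact: sadj_o.
by exists (@Ordinal n 1 isT).
Qed.

Lemma o_val (v : 'I_n) : (v != o) = (val v != 0).
Proof. by case: v => [[|v] hv] //; apply/negP => /eqP; apply; apply: val_inj. Qed.

Lemma nonS v : (exists c, c != v /\ ~~ sadj v c) <-> v != o.
Proof.
split.
  case=> c [h1 h2]; apply/eqP => E; move: h2; rewrite E sadj_sym sadj_o //.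
  by rewrite -E.
rewrite o_val => h; case E3: (val v == 3).
  exists (@Ordinal n 4 isT); split; last by rewrite /sadj /= (negbTE h).
  by apply/eqP => E; move: E3; rewrite -E.
exists (@Ordinal n 3 isT); split; last by rewrite /sadj /= (negbTE h).
by apply/eqP => E; move: E3; rewrite -E.
Qed.

Lemma nonT v : (exists c, c != v /\ ~~ tadj v c) <-> v != o.
Proof.
split.
  case=> c [h1 h2]; apply/eqP => E; move: h2; rewrite E /tadj sadj_sym sadj_o //.
  by rewrite -E.
rewrite o_val => h; case E3: (val v == 3).
  exists (@Ordinal n 4 isT); split; last by rewrite /tadj /sadj /= (negbTE h) !andbF.
  by apply/eqP => E; move: E3; rewrite -E.
exists (@Ordinal n 3 isT); split; last by rewrite /tadj /sadj /= (negbTE h) !andbF.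
by apply/eqP => E; move: E3; rewrite -E.
Qed.

Lemma game_ST : game sadj tadj 2 [::].
Proof.
split; first by [].
have g1 v : game sadj tadj 1 [:: (v, v)].
  apply: game1_single; [exact: sadj_sym|exact: sadj_irr|exact: tadj_sym|exact: tadj_irr| |].
    split=> _; have [c hc] := nbr_ST v; exists c => //; by rewrite /tadj hc.
  by rewrite nonS nonT.
by split=> v; exists v.
Qed.
End Stars.

From mathcomp Require Import all_boot.
From mathcomp Require Import zify.
From Stdlib Require Import Classical.
Set Implicit Arguments. Unset Strict Implicit. Unset Printing Implicit Defensive.

Lemma width_vars1 f : width f <= 1 -> exists x, {subset vars f <= [:: x; x]}.
Proof.
rewrite /width => hw.
case E: (undup (vars f)) hw => [|a [|b s]] // _.
- exists 0 => z hz; by rewrite -mem_undup E in hz.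
- exists a => z hz; rewrite -mem_undup E inE in hz; by rewrite inE hz.
Qed.

Lemma ST_contra k Phi :
  (forall G : graph, connected G -> param_ge Pv G k -> models G Phi <-> contains G P4) ->
  (models (SG k) Phi <-> models (TG k) Phi) -> False.
Proof.
move=> H E.
have hk : k <= (k.+4).+1 by rewrite ltnW // ltnS leqW // leqW // leqW // leqW.
have HS := H (SG k) (SG_conn k) hk.
have HT := H (TG k) (TG_conn k) hk.
apply: (SG_noP4 (k := k)); apply/HS/E/HT; exact: TG_P4.
Qed.

Theorem W_P4 : W_is Pv P4 2.
Proof.
split; first by exists PhiP4; split; [exact: defines_PhiP4 | exact: PhiP4_width].
move=> Phi [_ [k H]]; rewrite leqNgt; apply/negP => hw.
have [x hx] := width_vars1 hw.
have m12 : x != x -> forall (u v : 'I_(gn (SG k))) (u' : 'I_(gn (TG k))), exists w : 'I_(gn (TG k)),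
   (v == u) = (w == u') /\ gadj v u = gadj w u' by rewrite eqxx.
have m21 : x != x -> forall (u' w : 'I_(gn (TG k))) (u : 'I_(gn (SG k))), exists v : 'I_(gn (SG k)),
   (v == u) = (w == u') /\ gadj v u = gadj w u' by rewrite eqxx.
exact: (ST_contra H (@efw_models (SG k) (TG k) x x (o k) (o k) m12 m21 Phi hx)).
Qed.

Theorem D_P4 : D_is Pv P4 3.
Proof.
split; first by exists PhiP4; split; [exact: defines_PhiP4 | exact: PhiP4_qd].
move=> Phi [_ [k H]]; rewrite leqNgt; apply/negP => hq.
exact: (ST_contra H (@ef_models (SG k) (TG k) 2 Phi hq (game_ST k))).
Qed.

From mathcomp Require Import all_boot.
From mathcomp Require Import zify.
From Stdlib Require Import Classical.
Set Implicit Arguments. Unset Strict Implicit. Unset Printing Implicit Defensive.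

Definition PhiC4 := FEx 0 (FEx 1 (FAnd (FNot (FEq 0 1)) (FEx 2 (FEx 3 (FAnd (FNot (FEq 2 3))
   (FAnd (FAdj 0 2) (FAnd (FAdj 2 1) (FAnd (FAdj 1 3) (FAdj 3 0))))))))).

Lemma PhiC4_sentence : sentence PhiC4.
Proof. by case=> [|[|[|[|x]]]]. Qed.
Lemma PhiC4_qd : qd PhiC4 = 4. Proof. by []. Qed.

Lemma PhiC4_models G : models G PhiC4 <-> contains G C4.
Proof.
rewrite /models /= /upd /=; split.
  case=> x [y [nxy [z [w [nzw [hxz [hzy [hyw hwx]]]]]]]].
  exists (fun i : 'I_4 => if val i == 0 then x else if val i == 1 then z
                       else if val i == 2 then y else w); split.
    have nxz : x != z by apply: adj_neq.
    have nxw : x != w by rewrite eq_sym; apply: adj_neq.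
    have nzy : z != y by apply: adj_neq.
    have nyw : y != w by apply: adj_neq.
    move/eqP: nxy => nxy'; move/eqP: nzw => nzw'.
    move=> [[|[|[|[|i]]]] hi] [[|[|[|[|j]]]] hj] //=; try (by move=> _; apply: val_inj);
     try (by move=> E; move: nxz nxw nzy nyw nxy' nzw'; rewrite E ?eqxx);
     try (by rewrite ltnS ltn0 in hi); by rewrite ltnS ltn0 in hj.
  move=> [[|[|[|[|i]]]] hi] [[|[|[|[|j]]]] hj] //=; rewrite /c4_adj /= //;
    try (by rewrite ltnS ltn0 in hi); try (by rewrite ltnS ltn0 in hj);
    move=> _; by rewrite gsym.
case=> f [fi fe].
have ne (i j : 'I_4) : i != j -> f i <> f j by move=> h /fi E; rewrite E eqxx in h.
exists (f (@Ordinal 4 0 isT)), (f (@Ordinal 4 2 isT)); split; first by apply: ne.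
exists (f (@Ordinal 4 1 isT)), (f (@Ordinal 4 3 isT)); split; first by apply: ne.
by split; [|split; [|split]]; apply: fe.
Qed.

Lemma defines_PhiC4 : defines Pkappa C4 PhiC4.
Proof.
split; first exact: PhiC4_sentence.
by exists 0 => G _ _; apply: PhiC4_models.
Qed.

Section RichDef.
Variables (T : eqType) (r : rel T).
Definition cn a b := exists c, r a c && r b c.
Record rich := Rich {
 r_sym : symmetric r; r_irr : irreflexive r;
 r_tf : forall a b c, r a b -> r a c -> ~~ r b c;
 r_nb : forall a, exists c, r a c;
 r_F : forall a b, exists c, [&& c != a, c != b, ~~ r a c & ~~ r b c];
 r_TF : forall a b, a != b -> exists c, [&& c != b, r a c & ~~ r b c];
 r_2b : forall a, exists b, [/\ b != a, ~~ r a b & ~ cn a b] }.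

Lemma r_2a : rich -> forall a, exists b, [/\ b != a, ~~ r a b & cn a b].
Proof.
move=> R a; have [c hc] := r_nb R a.
have nca : c != a by apply: contraTneq hc => ->; rewrite (r_irr R).
have [b /and3P [nba hcb hab]] := r_TF R nca.
by exists b; split => //; exists c; rewrite hc (r_sym R) hcb.
Qed.

Lemma r_neq : rich -> forall a b, r a b -> a != b.
Proof. by move=> R a b; apply: contraTneq => ->; rewrite (r_irr R). Qed.
End RichDef.

Section RichGame.
Variables (T1 T2 : eqType) (r1 : rel T1) (r2 : rel T2).
Hypotheses (R1 : rich r1) (R2 : rich r2).

Lemma ext1 a1 b1 a2 b2 : (a1 == b1) = (a2 == b2) -> r1 a1 b1 = r2 a2 b2 ->
  (a1 != b1 -> (cn r1 a1 b1 <-> cn r2 a2 b2)) ->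
  forall c1, exists c2, [/\ (c1 == a1) = (c2 == a2), (c1 == b1) = (c2 == b2),
                            r1 c1 a1 = r2 c2 a2 & r1 c1 b1 = r2 c2 b2].
Proof.
move=> hab hr hcn c1.
case: (eqVneq c1 a1) => [->|na].
  by exists a2; rewrite !eqxx hab hr (r_irr R1) (r_irr R2).
case: (eqVneq c1 b1) => [Eb|nb].
  subst c1; exists b2; rewrite eqxx (r_irr R1) (r_irr R2) (r_sym R1) hr (r_sym R2); split => //.
  by rewrite eq_sym -hab eq_sym (negbTE na).
suff [c2 /and4P [h1 h2 /eqP h3 /eqP h4]] :
  exists c2, [&& c2 != a2, c2 != b2, r2 c2 a2 == r1 c1 a1 & r2 c2 b2 == r1 c1 b1].
  by exists c2; rewrite (negbTE h1) (negbTE h2) h3 h4.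
case: (eqVneq a1 b1) => [Eab|Nab].
  subst b1; move: hab; rewrite eqxx => /esym /eqP Eb; subst b2.
  case hc: (r1 c1 a1).
    have [c hc2] := r_nb R2 a2.
    by exists c; rewrite (r_sym R2) hc2 eq_sym (r_neq R2 hc2).
  have [c /and4P [h1 _ h3 _]] := r_F R2 a2 a2.
  by exists c; rewrite h1 (r_sym R2) (negbTE h3).
have Nab2 : a2 != b2 by rewrite -hab.
case ha: (r1 c1 a1); case hb: (r1 c1 b1).
- have : cn r1 a1 b1 by exists c1; rewrite !(r_sym R1 _ c1) ha hb.
  move/(hcn Nab) => [c /andP [hac hbc]].
  exists c; rewrite !(r_sym R2 c) hac hbc !eqxx /= andbT.
  by rewrite eq_sym (r_neq R2 hac) eq_sym (r_neq R2 hbc).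
- have [c /and3P [h1 h2 h3]] := r_TF R2 Nab2.
  by exists c; rewrite h1 !(r_sym R2 c) h2 (negbTE h3) eq_sym (r_neq R2 h2).
- have [c /and3P [h1 h2 h3]] := r_TF R2 (negbT (introF eqP (fun E => (negP Nab2) (introT eqP (esym E))))).
  by exists c; rewrite h1 !(r_sym R2 c) h2 (negbTE h3) eq_sym (r_neq R2 h2).
- have [c /and4P [h1 h2 h3 h4]] := r_F R2 a2 b2.
  by exists c; rewrite h1 h2 !(r_sym R2 c) (negbTE h3) (negbTE h4).
Qed.
End RichGame.

Lemma piso1 (T1 T2 : eqType) (r1 : rel T1) (r2 : rel T2) a b :
  irreflexive r1 -> irreflexive r2 -> piso r1 r2 [:: (a, b)].
Proof. by move=> i1 i2 p q; rewrite !inE => /eqP -> /eqP ->; rewrite !eqxx i1 i2. Qed.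

Lemma game1_pair (T1 T2 : eqType) (r1 : rel T1) (r2 : rel T2) (R1 : rich r1) (R2 : rich r2)
  a1 b1 a2 b2 : (a1 == b1) = (a2 == b2) -> r1 a1 b1 = r2 a2 b2 ->
  (a1 != b1 -> (cn r1 a1 b1 <-> cn r2 a2 b2)) ->
  game r1 r2 1 [:: (b1, b2); (a1, a2)].
Proof.
move=> hab hr hcn.
have s1 := r_sym R1; have s2 := r_sym R2; have i1 := r_irr R1; have i2 := r_irr R2.
have p2 : piso r1 r2 [:: (b1, b2); (a1, a2)].
  apply: piso_cons => //; first by rewrite i1 i2.
    exact: piso1.
  by move=> q; rewrite inE => /eqP -> /=; rewrite eq_sym hab eq_sym s1 hr s2.
split => //; split.
  move=> c1; have [c2 [h1 h2 h3 h4]] := ext1 R1 R2 hab hr hcn c1; exists c2.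
  apply: piso_cons => //; first by rewrite i1 i2.
  by move=> q; rewrite !inE => /orP [] /eqP -> /=.
move=> c2.
have hcn' : a2 != b2 -> (cn r2 a2 b2 <-> cn r1 a1 b1).
  by rewrite -hab => /hcn; case.
have [c1 [h1 h2 h3 h4]] := ext1 R2 R1 (esym hab) (esym hr) hcn' c2; exists c1.
apply: piso_cons => //; first by rewrite i1 i2.
by move=> q; rewrite !inE => /orP [] /eqP -> /=.
Qed.

Lemma choose2 (T1 T2 : eqType) (r1 : rel T1) (r2 : rel T2) (R1 : rich r1) (R2 : rich r2)
  a1 a2 b1 : exists b2, [/\ (a1 == b1) = (a2 == b2), r1 a1 b1 = r2 a2 b2 &
     (a1 != b1 -> (cn r1 a1 b1 <-> cn r2 a2 b2))].
Proof.
case: (eqVneq a1 b1) => [<-|nab].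
  by exists a2; rewrite !eqxx (r_irr R1) (r_irr R2).
case h: (r1 a1 b1).
  have [b2 hb2] := r_nb R2 a2.
  exists b2; rewrite hb2; split => //; first by apply/esym/negbTE; apply: (r_neq R2 hb2).
  move=> _; split.
    by case=> c /andP [h1 h2]; move: (r_tf R1 h h1); rewrite h2.
  by case=> c /andP [h1 h2]; move: (r_tf R2 hb2 h1); rewrite h2.
case: (classic (cn r1 a1 b1)) => hc.
  have [b2 [h1 h2 h3]] := r_2a R2 a2.
  by exists b2; rewrite (negbTE h2); split => //; apply/esym/negbTE; rewrite eq_sym.
have [b2 [h1 h2 h3]] := r_2b R2 a2.
by exists b2; rewrite (negbTE h2); split => //; apply/esym/negbTE; rewrite eq_sym.
Qed.

Lemma game2_rich (T1 T2 : eqType) (r1 : rel T1) (r2 : rel T2) (R1 : rich r1) (R2 : rich r2)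
  a1 a2 : game r1 r2 2 [:: (a1, a2)].
Proof.
split; first exact: piso1 (r_irr R1) (r_irr R2).
split.
  move=> b1; have [b2 [h1 h2 h3]] := choose2 R1 R2 a1 a2 b1; exists b2.
  exact: game1_pair.
move=> b2; have [b1 [h1 h2 h3]] := choose2 R2 R1 a2 a1 b2; exists b1.
apply: (game1_pair R1 R2); [by rewrite h1 | by rewrite h2 | by rewrite -h1 => /h3; case].
Qed.

Lemma game3_rich (T1 T2 : eqType) (r1 : rel T1) (r2 : rel T2) (R1 : rich r1) (R2 : rich r2)
  (v0 : T1) (w0 : T2) : game r1 r2 3 [::].
Proof.
split; first by [].
split.
  by move=> v; exists w0; apply: game2_rich.
by move=> w; exists v0; apply: game2_rich.
Qed.

From mathcomp Require Import all_boot all_algebra.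
From mathcomp Require Import zify ring.
From Stdlib Require Import Classical.
Set Implicit Arguments. Unset Strict Implicit. Unset Printing Implicit Defensive.
Import GRing.Theory.

Section Biaffine.
Variable p : nat.
Hypothesis pp : prime p.
Local Notation F := 'F_p.
Definition BT := (bool * (F * F))%type.
Definition binc (P L : F * F) : bool := (P.2 == L.1 * P.1 + L.2)%R.
Definition be1 (u v : BT) : bool :=
  (u.1 != v.1) && (if u.1 then binc v.2 u.2 else binc u.2 v.2).
Definition Qv : BT := (false, (1, 0))%R.
Definition Lv : BT := (true, (1, 0))%R.
Definition eb (ex : bool) (u v : BT) : bool :=
  be1 u v || (ex && (((u == Qv) && (v == Lv)) || ((u == Lv) && (v == Qv)))).

Lemma be1_sym : symmetric be1.
Proof. by move=> [[] [a1 a2]] [[] [b1 b2]]. Qed.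
Lemma be1_irr : irreflexive be1.
Proof. by move=> [b u]; rewrite /be1 eqxx. Qed.
Lemma eb_sym ex : symmetric (eb ex).
Proof.
move=> u v; rewrite /eb be1_sym; case: ex => /=; last by []. by rewrite (andbC (v == Qv)) (andbC (v == Lv)) [X in _ || X]orbC.
Qed.
Lemma eb_irr ex : irreflexive (eb ex).
Proof.
move=> u; rewrite /eb be1_irr /=; case: ex => //=.
by apply/negP => /orP [] /andP [/eqP -> ]; rewrite /Qv /Lv => /eqP [].
Qed.
Lemma eb_bip ex u v : eb ex u v -> u.1 != v.1.
Proof.
rewrite /eb => /orP [/andP [] //|/andP [_ /orP [] /andP [/eqP -> /eqP ->]]] //.
Qed.
Lemma be1_eb ex u v : be1 u v -> eb ex u v.
Proof. by rewrite /eb => ->. Qed.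
Lemma eb_e1 ex a c : c != Qv -> c != Lv -> eb ex a c = be1 a c.
Proof. by rewrite /eb => /negbTE -> /negbTE ->; rewrite !andbF orbF. Qed.

Lemma card_BT : #|{: BT}| = 2 * (p * p).
Proof. by rewrite !card_prod card_bool card_Fp. Qed.

Definition nbmap (a : BT) (t : F) : BT :=
  if a.1 then (false, (t, a.2.1 * t + a.2.2)%R) else (true, (t, a.2.2 - t * a.2.1)%R).

Lemma nbmap_inj a : injective (nbmap a).
Proof. by rewrite /nbmap; case: a.1 => t t' [E]. Qed.

Definition N1 a := [set c | be1 a c].
Lemma N1_img a : N1 a = nbmap a @: [set: F].
Proof.
apply/setP => c; rewrite inE; apply/idP/imsetP.
  case: a => [[] [m c0]]; case: c => [[] [s t]] //=; rewrite /be1 /binc /nbmap /= => /eqP E;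
    exists s; rewrite ?inE // E //.
  congr (_, (_, _)); ring.
case=> t _ ->; case: a => [[] [m c0]] //=; rewrite /binc /=; apply/eqP => //.
rewrite /nbmap /=; ring.
Qed.

Lemma card_N1 a : #|N1 a| = p.
Proof. by rewrite N1_img card_imset ?cardsT ?card_Fp //; exact: nbmap_inj. Qed.

Lemma alg (x1 y1 x2 y2 m c m' c' : F) : y1 = (m * x1 + c)%R -> y2 = (m * x2 + c)%R ->
  y1 = (m' * x1 + c')%R -> y2 = (m' * x2 + c')%R -> (x1, y1) = (x2, y2) \/ (m, c) = (m', c').
Proof.
move=> e1 e2 e3 e4.
case: (eqVneq m m') => [Em|Nm].
  subst m'; right; congr (_, _); apply: (@addrI _ (m * x1)%R); by rewrite -e1 -e3.
have e13 : (m * x1 + c = m' * x1 + c')%R by rewrite -e1 -e3.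
have e24 : (m * x2 + c = m' * x2 + c')%R by rewrite -e2 -e4.
have h : ((m - m') * (x1 - x2) = 0)%R.
  have -> : ((m - m') * (x1 - x2) =
     (m * x1 + c - (m' * x1 + c')) - (m * x2 + c - (m' * x2 + c')))%R by ring.
  rewrite e13 e24; ring.
move: h => /eqP; rewrite mulf_eq0 !subr_eq0 (negbTE Nm) /= => /eqP Ex.
by left; rewrite e1 e2 Ex.
Qed.

Lemma codeg a b : a != b -> #|N1 a :&: N1 b| <= 1.
Proof.
move=> nab; apply/card_le1_eqP => u v; rewrite !inE => /andP [hau hbu] /andP [hav hbv].
move: nab hau hbu hav hbv.
case: a => [[] [a1 a2]]; case: b => [[] [b1 b2]]; case: u => [[] [u1 u2]];
  case: v => [[] [v1 v2]] //= nab; rewrite /binc /= => /eqP h1 /eqP h2 /eqP h3 /eqP h4.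
- case: (alg h1 h3 h2 h4) => [[-> ->] //|[E1 E2]].
  by move: nab; rewrite E1 E2 eqxx.
- case: (alg h1 h2 h3 h4) => [[E1 E2]|[-> ->] //].
  by move: nab; rewrite E1 E2 eqxx.
Qed.

Hypothesis p7 : 7 <= p.

Definition Nb ex a := [set c | eb ex a c].

Lemma N1_Nb ex a : N1 a \subset Nb ex a.
Proof. by apply/subsetP => c; rewrite !inE; apply: be1_eb. Qed.

Lemma Nb_sub ex a : Nb ex a \subset N1 a :|: [set Qv; Lv].
Proof.
apply/subsetP => c; rewrite !inE.
case: (eqVneq c Qv) => [->|nq]; first by rewrite !orbT.
case: (eqVneq c Lv) => [->|nl]; first by rewrite !orbT.
by rewrite eb_e1 // => ->.
Qed.

Lemma card_Nb ex a : #|Nb ex a| <= p + 2.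
Proof.
apply: leq_trans (subset_leq_card (Nb_sub ex a)) _.
apply: leq_trans (leq_card_setU _ _) _.
by rewrite card_N1 leq_add2l cards2; case: (_ != _).
Qed.

Lemma codeg_Nb ex a b : a != b -> #|Nb ex a :&: Nb ex b| <= 3.
Proof.
move=> nab.
have sub : Nb ex a :&: Nb ex b \subset (N1 a :&: N1 b) :|: [set Qv; Lv].
  apply/subsetP => c; rewrite !inE.
  case: (eqVneq c Qv) => [->|nq]; first by rewrite !orbT.
  case: (eqVneq c Lv) => [->|nl]; first by rewrite !orbT.
  by rewrite !eb_e1 // => ->.
apply: leq_trans (subset_leq_card sub) _.
apply: leq_trans (leq_card_setU _ _) _.
have := codeg nab; rewrite cards2; case: (_ != _) => /=; lia.
Qed.

Lemma rich_eb ex : rich (eb ex).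
Proof.
have s := eb_sym ex; have i := eb_irr ex.
split => //.
- move=> a b c hab hac; apply/negP => hbc.
  move: (eb_bip hab) (eb_bip hac) (eb_bip hbc).
  by case: a.1; case: b.1; case: c.1.
- move=> a; exists (nbmap a 0%R); apply: be1_eb.
  by have := N1_img a; move/setP/(_ (nbmap a 0%R)); rewrite inE => ->; apply: imset_f.
- move=> a b.
  set B := [set a; b] :|: Nb ex a :|: Nb ex b.
  have hB : #|B| < #|predT : {pred BT}|.
    have -> : #|predT : {pred BT}| = 2 * (p * p) by exact: card_BT.
    apply: leq_ltn_trans (leq_card_setU _ _) _.
    have h1 := (leq_card_setU [set a; b] (Nb ex a)).1.
    have h2 : #|[set a; b]| <= 2 by rewrite cards2; case: (_ != _).
    have h3 := card_Nb ex a; have h4 := card_Nb ex b.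
    nia.
  have [c _ hc] := avoid hB; exists c.
  have h1 : c != a by apply: contra hc => /eqP ->; rewrite /B !in_setU !in_set1 eqxx.
  have h2 : c != b by apply: contra hc => /eqP ->; rewrite /B !in_setU !in_set1 eqxx !orbT.
  have h3 : ~~ eb ex a c by apply: contra hc => h; rewrite /B !in_setU !in_set h orbT.
  have h4 : ~~ eb ex b c by apply: contra hc => h; rewrite /B !in_setU !in_set h !orbT.
  by rewrite h1 h2 h3 h4.
- move=> a b nab.
  set B := [set b] :|: (Nb ex a :&: Nb ex b).
  have hB : #|B| < #|N1 a|.
    rewrite card_N1; apply: leq_ltn_trans (leq_card_setU _ _) _.
    have := codeg_Nb ex nab; rewrite cards1; lia.
  have [c hc hcB] := avoid hB.
  have hac : eb ex a c by apply: be1_eb; move: hc; rewrite inE.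
  have h1 : c != b by apply: contra hcB => /eqP ->; rewrite /B in_setU set11.
  have h2 : ~~ eb ex b c by apply: contra hcB => h; rewrite /B in_setU in_setI !in_set hac h orbT.
  by exists c; rewrite h1 hac h2.
- move=> a.
  set B := (a |: Nb ex a) :|: \bigcup_(c in Nb ex a) Nb ex c.
  have hB : #|B| < #|predT : {pred BT}|.
    have -> : #|predT : {pred BT}| = 2 * (p * p) by exact: card_BT.
    apply: leq_ltn_trans (leq_card_setU _ _) _.
    have h1 : #|a |: Nb ex a| <= (p + 2).+1.
      by rewrite cardsU1; have := card_Nb ex a; case: (_ \notin _) => /=; lia.
    have h2 : #|\bigcup_(c in Nb ex a) Nb ex c| <= (p + 2) * (p + 2).
      apply: leq_trans (card_bigcup_le _ _) _.
      have hs : \sum_(c in Nb ex a) #|Nb ex c| <= \sum_(c in Nb ex a) (p + 2).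
        by apply: leq_sum => c _; exact: card_Nb.
      apply: leq_trans hs _.
      by rewrite sum_nat_const leq_mul2r card_Nb orbT.
    nia.
  have [b _ hb] := avoid hB; exists b; split.
  - by apply: contra hb => /eqP ->; rewrite /B in_setU setU11.
  - by apply: contra hb => h; rewrite /B in_setU in_setU1 in_set h orbT.
  - case=> c /andP [hac hbc]; move/negP: hb; apply; rewrite /B in_setU; apply/orP; right.
    by apply/bigcupP; exists c; rewrite in_set // s.
Qed.
End Biaffine.

From mathcomp Require Import all_boot all_algebra.
From mathcomp Require Import zify ring.
From Stdlib Require Import Classical.
Set Implicit Arguments. Unset Strict Implicit. Unset Printing Implicit Defensive.
Import GRing.Theory.

Lemma c4_of (T : finType) (r : rel T) : symmetric r -> forall a b c d,
  uniq [:: a; b; c; d] -> r a b -> r b c -> r c d -> r d a ->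
  exists f : 'I_(gn C4) -> T, injective f /\ forall i j, @gadj C4 i j -> r (f i) (f j).
Proof.
move=> s a b c d; rewrite /= !inE !negb_or => /and4P [/and3P [hab hac had] /andP [hbc hbd] hcd _].
move=> e1 e2 e3 e4.
exists (fun i : 'I_4 => if val i == 0 then a else if val i == 1 then b
                       else if val i == 2 then c else d); split.
  move=> [[|[|[|[|i]]]] hi] [[|[|[|[|j]]]] hj] //=; try (by move=> _; apply: val_inj);
   try (by move=> E; move: hab hac had hbc hbd hcd; rewrite E ?eqxx);
   try (by rewrite ltnS ltn0 in hi); by rewrite ltnS ltn0 in hj.
move=> [[|[|[|[|i]]]] hi] [[|[|[|[|j]]]] hj] //=; rewrite /c4_adj /= //;
  try (by rewrite ltnS ltn0 in hi); try (by rewrite ltnS ltn0 in hj);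
  move=> _; by rewrite s.
Qed.

Lemma preim_le (A B : finType) (D : {pred A}) (f : A -> B) (S : {set B}) :
  {in D &, injective f} -> #|[set x in D | f x \in S]| <= #|S|.
Proof.
move=> fi; rewrite -(card_in_imset (f := f)).
  apply: subset_leq_card; apply/subsetP => y /imsetP [x]; rewrite inE => /andP [_ h] ->.
  exact: h.
by move=> x y; rewrite !inE => /andP [hx _] /andP [hy _]; apply: fi.
Qed.

Lemma dbl_lt n q : n.*2.+1 < q -> n < q.
Proof. rewrite -addnn; lia. Qed.
Lemma arith1 u a b c s q : u <= a + b -> a <= 1 -> b <= s -> c <= s -> s.*2.+1 < q -> u + c < q.
Proof. rewrite -addnn; lia. Qed.

Section C4B.
Variable p : nat.
Hypothesis pp : prime p.
Local Notation F := 'F_p.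
Local Notation BT := (BT p).

Lemma F10 : (1%R : F) != 0%R.
Proof. exact: oner_neq0. Qed.

Lemma eb_false_noC4 : ~ (exists f : 'I_(gn C4) -> BT,
    injective f /\ forall i j, @gadj C4 i j -> eb false (f i) (f j)).
Proof.
case=> f [fi fe].
have ebf u v : eb false u v = be1 u v by rewrite /eb orbF.
set o0 := @Ordinal 4 0 isT; set o1 := @Ordinal 4 1 isT.
set o2 := @Ordinal 4 2 isT; set o3 := @Ordinal 4 3 isT.
have h01 : be1 (f o0) (f o1) by rewrite -ebf; apply: fe.
have h21 : be1 (f o2) (f o1) by rewrite be1_sym -ebf; apply: fe.
have h23 : be1 (f o2) (f o3) by rewrite -ebf; apply: fe.
have h03 : be1 (f o0) (f o3) by rewrite be1_sym -ebf; apply: fe.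
have n02 : f o0 != f o2 by apply/eqP => /fi.
have := codeg n02; move/card_le1_eqP => /(_ (f o1) (f o3)).
rewrite !inE h01 h21 h23 h03 => /(_ isT isT) /fi.
by [].
Qed.

Lemma eb_true_C4 : exists f : 'I_(gn C4) -> BT,
    injective f /\ forall i j, @gadj C4 i j -> eb true (f i) (f j).
Proof.
apply: (@c4_of _ (@eb p true) (@eb_sym p true) (false, (0, 0))%R (true, (0, 0))%R (Qv p) (Lv p)).
- by [].
- by rewrite /eb /be1 /binc /=.
- by rewrite /eb /be1 /binc /Qv /=.
- by rewrite /eb !eqxx orbT.
- by rewrite /eb /be1 /binc /Lv /=.
Qed.

Section Conn.
Variable S : {set BT}.
Hypothesis hS : (#|S|).*2.+1 < p.
Let R := [rel a b : BT | [&& be1 a b, a \notin S & b \notin S]].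

Lemma cF : #|predT : {pred F}| = p.
Proof. exact: card_Fp pp. Qed.

Lemma edgeR (a b : BT) : be1 a b -> a \notin S -> b \notin S -> connect R a b.
Proof. by move=> h ha hb; apply: connect1; rewrite /= h ha hb. Qed.

Lemma line_pt (m c : F) : exists x : F, (false, (x, m * x + c)%R) \notin S.
Proof.
set f := fun x : F => ((false, (x, m * x + c)%R) : BT).
have h : #|[set x in predT | f x \in S]| < #|predT : {pred F}|.
  apply: leq_ltn_trans (preim_le (D := predT) (f := f) S _) _.
    by move=> a b _ _ [].
  rewrite cF; exact: dbl_lt hS.
have [x _ hx] := avoid h; exists x; move: hx; by rewrite inE.
Qed.

Lemma pt_pt (x1 y1 x2 y2 : F) : ((false, (x1, y1)) : BT) \notin S ->
  ((false, (x2, y2)) : BT) \notin S -> connect R (false, (x1, y1)) (false, (x2, y2)).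
Proof.
move=> hP hQ.
set Lm := fun m : F => ((true, (m, y1 - m * x1)%R) : BT).
have hc1 : #|[set m in predT | Lm m \in S]| < #|predT : {pred F}|.
  apply: leq_ltn_trans (preim_le (D := predT) (f := Lm) S _) _.
    by move=> a b _ _ [].
  rewrite cF; exact: dbl_lt hS.
have [m1 _ hm1] := avoid hc1; rewrite inE /= in hm1.
set c1 := (y1 - m1 * x1)%R.
have ePL : be1 (false, (x1, y1)) (Lm m1) by rewrite /be1 /binc /=; apply/eqP; rewrite /c1; ring.
case hQ1 : (binc (x2, y2) (m1, c1)).
  apply: connect_trans (edgeR ePL hP hm1) (edgeR _ hm1 hQ).
  by rewrite /be1 /=.
set Km := fun m : F => ((true, (m, y2 - m * x2)%R) : BT).
set xR := fun m : F => (((y2 - m * x2) - c1) / (m1 - m))%R.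
set Rp := fun m : F => ((false, (xR m, m1 * xR m + c1)%R) : BT).
have onL m : be1 (Lm m1) (Rp m) by rewrite /be1 /binc /=.
have onK m : m != m1 -> be1 (Rp m) (Km m).
  move=> nm; rewrite /be1 /binc /=.
  have h : ((m1 - m) * xR m = (y2 - m * x2) - c1)%R.
    by rewrite /xR mulrC divfK // subr_eq0 eq_sym.
  have : ((m1 * xR m + c1) - (m * xR m + (y2 - m * x2)) =
          (m1 - m) * xR m - ((y2 - m * x2) - c1))%R by ring.
  by rewrite h subrr => /eqP; rewrite subr_eq0.
have KQ m : be1 (Km m) (false, (x2, y2)) by rewrite /be1 /binc /=; apply/eqP; ring.
have Rinj : {in [pred m | m != m1] &, injective Rp}.
  move=> m m' hm hm' E.
  have h1 := onK m hm; have h2 := onK m' hm'; rewrite -E in h2.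
  have h3 := KQ m; have h4 := KQ m'.
  move: h1 h2 h3 h4; rewrite /be1 /binc /= => /eqP h1 /eqP h2 /eqP h3 /eqP h4.
  case: (alg h1 h3 h2 h4) => [[Ex Ey]|[-> _] //].
  by move: hQ1; rewrite /binc /= -Ex -Ey eqxx.
set B2 := [set m | m == m1] :|: [set m in predT | Km m \in S] :|:
          [set m in [pred m | m != m1] | Rp m \in S].
have hB2 : #|B2| < #|predT : {pred F}|.
  rewrite cF; apply: leq_ltn_trans (leq_card_setU _ _) _.
  have e1 := (leq_card_setU [set m | m == m1] [set m in predT | Km m \in S]).1.
  have e2 : #|[set m | m == m1]| <= 1.
    by apply/card_le1_eqP => a b; rewrite !inE => /eqP -> /eqP ->.
  have e3 : #|[set m in predT | Km m \in S]| <= #|S|.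
    by apply: preim_le => a b _ _ [].
  have e4 := preim_le S Rinj.
  exact: arith1 e1 e2 e3 e4 hS.
have [m2 _ hm2] := avoid hB2.
have n21 : m2 != m1 by apply: contra hm2 => h; rewrite !in_setU !inE h.
have hK : Km m2 \notin S by apply: contra hm2 => h; rewrite !in_setU !inE h orbT.
have hR : Rp m2 \notin S by apply: contra hm2 => h; rewrite !in_setU !inE h n21 !orbT.
apply: connect_trans (edgeR ePL hP hm1) _.
apply: connect_trans (edgeR (onL m2) hm1 hR) _.
apply: connect_trans (edgeR (onK m2 n21) hR hK) _.
exact: edgeR (KQ m2) hK hQ.
Qed.

Lemma conn_all (x y : BT) : x \notin S -> y \notin S -> connect R x y.
Proof.
have Rs : connect_sym R.
  by apply: sym_connect_sym => a b; rewrite /= be1_sym (andbC (a \notin S)).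
have top (v : BT) : v \notin S -> exists x1 y1, ((false, (x1, y1)) : BT) \notin S /\
    connect R v (false, (x1, y1)).
  case: v => [[] [m c]] hv; last by exists m, c; split => //; exact: connect0.
  have [z hz] := line_pt m c; exists z, (m * z + c)%R; split => //.
  by apply: edgeR hv hz; rewrite /be1 /binc /=.
move=> hx hy.
have [a1 [b1 [h1 c1]]] := top x hx; have [a2 [b2 [h2 c2]]] := top y hy.
apply: connect_trans c1 _; apply: connect_trans (pt_pt h1 h2) _.
by rewrite Rs.
Qed.
End Conn.
End C4B.

From mathcomp Require Import all_boot all_algebra.
From mathcomp Require Import zify ring.
From Stdlib Require Import Classical.
Set Implicit Arguments. Unset Strict Implicit. Unset Printing Implicit Defensive.
Import GRing.Theory.

Lemma arith2 s K p : s < K -> K.*2 + 7 < p -> s.*2.+1 < p.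
Proof. rewrite -!addnn; lia. Qed.
Lemma arith3 K p : K.*2 + 7 < p -> K < 2 * (p * p).
Proof. rewrite -addnn; nia. Qed.
Lemma arith4 K p : K.*2 + 7 < p -> 7 <= p.
Proof. rewrite -addnn; lia. Qed.

Lemma C4_graphs k0 : exists G1 G2 : graph,
  [/\ connected G1 /\ connected G2, param_ge Pkappa G1 k0 /\ param_ge Pkappa G2 k0,
      ~ contains G1 C4 /\ contains G2 C4,
      (forall Phi, qd Phi <= 3 -> (models G1 Phi <-> models G2 Phi)) &
      (forall Phi, width Phi <= 2 -> (models G1 Phi <-> models G2 Phi))].
Proof.
set K := k0.+1.
have [p hp pp] := prime_above (K.*2 + 7).
have p7 := arith4 hp.
set G1 := mkG (@eb_sym p false) (@eb_irr p false).
set G2 := mkG (@eb_sym p true) (@eb_irr p true).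
have KC ex : kconnected (mkG (@eb_sym p ex) (@eb_irr p ex)) K.
  apply: mkG_kconnected => //; last first.
    exact: leq_trans (arith3 hp) (eq_leq (esym (card_BT pp))).
  move=> S hS x y hx hy.
  apply: (@connect_map _ _ [rel a b | [&& be1 a b, a \notin S & b \notin S]] _ id _ x y
     (conn_all pp (arith2 hS hp) hx hy)).
  by move=> a b /= /and3P [h1 h2 h3]; rewrite h2 h3 (be1_eb ex h1).
have R1 := rich_eb pp p7 false; have R2 := rich_eb pp p7 true.
have NB1 : NB G1.
  apply: mkG_NB => a; split; first exact: r_nb R1 a.
  have [b /and4P [h1 _ h3 _]] := r_F R1 a a; by exists b.
have NB2 : NB G2.
  apply: mkG_NB => a; split; first exact: r_nb R2 a.
  have [b /and4P [h1 _ h3 _]] := r_F R2 a a; by exists b.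
exists G1, G2; split.
- by split; [exact: (KC false).2.1 | exact: (KC true).2.1].
- by split; exists K; split => //; [exact: (KC false) | exact: (KC true)].
- split.
    by move=> /(mkG_contains (@eb_sym p false) (@eb_irr p false) C4).2 H; apply: (@eb_false_noC4 p H).
  by apply/(mkG_contains (@eb_sym p true) (@eb_irr p true) C4).1; apply: eb_true_C4.
- move=> Phi hq; apply: (ef_models hq).
  have := game_mk (@eb_sym p false) (@eb_irr p false) (@eb_sym p true) (@eb_irr p true)
     (game3_rich R1 R2 (Qv p) (Qv p)).
  by [].
- move=> Phi hw; have [x [y hxy]] := width_vars hw.
  have m12 : x != y -> forall (u v : 'I_(gn G1)) (u' : 'I_(gn G2)), exists w : 'I_(gn G2),
     (v == u) = (w == u') /\ gadj v u = gadj w u'.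
    by move=> _; apply: match_of_NB.
  have m21 : x != y -> forall (u' w : 'I_(gn G2)) (u : 'I_(gn G1)), exists v : 'I_(gn G1),
     (v == u) = (w == u') /\ gadj v u = gadj w u'.
    move=> _ u' w u; have [v [h1 h2]] := match_of_NB (G1 := G2) NB1 u' w u.
    by exists v; rewrite h1 h2.
  exact: (@efw_models G1 G2 x y (enum_rank (Qv p)) (enum_rank (Qv p)) m12 m21 Phi hxy).
Qed.

Theorem D_C4 : D_is Pkappa C4 4.
Proof.
split; first by exists PhiC4; split; [exact: defines_PhiC4 | exact: PhiC4_qd].
move=> Phi [_ [k H]]; rewrite leqNgt; apply/negP => hq.
have [G1 [G2 [[c1 c2] [g1 g2] [n1 n2] E _]]] := C4_graphs k.
by apply: n1; apply/(H G1 c1 g1)/(E Phi hq)/(H G2 c2 g2).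
Qed.

Theorem W_C4 : W_ge Pkappa C4 3.
Proof.
move=> Phi [_ [k H]]; rewrite leqNgt; apply/negP => hw.
have [G1 [G2 [[c1 c2] [g1 g2] [n1 n2] _ E]]] := C4_graphs k.
by apply: n1; apply/(H G1 c1 g1)/(E Phi hw)/(H G2 c2 g2).
Qed.

Theorem theorem13 :
  (W_is Pv P4 2 /\ D_is Pv P4 3) /\ (D_is Pkappa C4 4 /\ W_ge Pkappa C4 3).
Proof. split; split; [exact: W_P4 | exact: D_P4 | exact: D_C4 | exact: W_C4]. Qed.
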